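(* Let $I\subseteq\mathbb{R}$ be a nonempty open interval, let $f:I\to\mathbb{R}$ be Wright convex, and let $g:I\to\mathbb{R}$ be a convex function with $g|_{I\cap\mathbb{Q}}=f|_{I\cap\mathbb{Q}}$. Then for all $u,v>0$ and all $x\in I$ with $x+u+v\in I$, $$f(x+u+v)-f(x+u)-f(x+v)+f(x)=g(x+u+v)-g(x+u)-g(x+v)+g(x).$$
   Context: A function $f:I\to\mathbb{R}$ on an interval $I$ is called Wright convex if $f(tx+(1-t)y)+f((1-t)x+ty)\leq f(x)+f(y)$ for all $x,y\in I$ and $t\in[0,1]$. *)

(* Defs.v *)
From Stdlib Require Import Reals QArith Qreals Lra.
Open Scope R_scope.

Definition is_interval (I : R -> Prop) : Prop :=
  forall x y z, I x -> I y -> x <= z <= y -> I z.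

Definition is_open_set (I : R -> Prop) : Prop :=
  forall x, I x -> exists e, 0 < e /\ forall y, Rabs (y - x) < e -> I y.

Definition nonempty_open_interval (I : R -> Prop) : Prop :=
  is_interval I /\ is_open_set I /\ exists x, I x.

Definition wright_convex_on (I : R -> Prop) (f : R -> R) : Prop :=
  forall x y t, I x -> I y -> 0 <= t <= 1 ->
    f (t * x + (1 - t) * y) + f ((1 - t) * x + t * y) <= f x + f y.

Definition convex_on (I : R -> Prop) (g : R -> R) : Prop :=
  forall x y t, I x -> I y -> 0 <= t <= 1 ->
    g (t * x + (1 - t) * y) <= t * g x + (1 - t) * g y.

Definition is_rational (x : R) : Prop := exists q : Q, Q2R q = x.

(* Main.v *)
Require Import Defs.
From Stdlib Require Import Reals QArith Qreals Lra Lia.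
Open Scope R_scope.
Lemma Qdense (a d : R) : 0 < d -> exists q : Q, a < Q2R q < a + d.
Proof.
  intros Hd.
  assert (Hid : 0 < / d) by (apply Rinv_0_lt_compat; lra).
  remember (up (/ d)) as z eqn:Ez.
  destruct (archimed (/ d)) as [H1 _]. rewrite <- Ez in H1.
  assert (Hz : 0 < IZR z) by lra.
  assert (Hz' : (0 < z)%Z) by (apply lt_IZR; exact Hz).
  remember (up (a * IZR z)) as m eqn:Em.
  destruct (archimed (a * IZR z)) as [H2 H3]. rewrite <- Em in H2, H3.
  exists (Qmake m (Z.to_pos z)).
  unfold Q2R; simpl. rewrite Z2Pos.id by exact Hz'.
  assert (Hdz : d * IZR z > 1).
  { apply (Rmult_lt_reg_r (/ d)). exact Hid.
    field_simplify; lra. }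
  split.
  - apply (Rmult_lt_reg_r (IZR z)); [lra|]. field_simplify; lra.
  - apply (Rmult_lt_reg_r (IZR z)); [lra|].
    field_simplify; nra.
Qed.
Lemma conv_bound (I : R -> Prop) (g : R -> R) (a e : R) :
  convex_on I g -> 0 < e -> (forall y, Rabs (y - a) <= e -> I y) ->
  forall s, Rabs (s - a) <= e ->
  Rabs (g s - g a) <= Rabs (s - a) * ((Rabs (g (a+e) - g a) + Rabs (g a - g (a-e))) / e).
Proof.
  intros Hc He Hb s Hs.
  assert (Ia : I a) by (apply Hb; rewrite Rminus_diag, Rabs_R0; lra).
  assert (Iap : I (a+e)) by (apply Hb; replace (a+e-a) with e by ring; rewrite Rabs_pos_eq; lra).
  assert (Iam : I (a-e)) by (apply Hb; replace (a-e-a) with (-e) by ring; rewrite Rabs_Ropp, Rabs_pos_eq; lra).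
  assert (Is : I s) by (apply Hb; exact Hs).
  assert (HA1 := Rle_abs (g (a+e) - g a)).
  assert (HA2 := Rle_abs (- (g (a+e) - g a))). rewrite Rabs_Ropp in HA2.
  assert (HA3 := Rle_abs (g a - g (a-e))).
  assert (HA4 := Rle_abs (- (g a - g (a-e)))). rewrite Rabs_Ropp in HA4.
  remember (Rabs (g (a+e) - g a) + Rabs (g a - g (a-e))) as M eqn:EM.
  destruct (Rle_or_lt a s) as [Has|Has].
  - rewrite (Rabs_pos_eq (s-a)) by lra.
    rewrite (Rabs_pos_eq (s-a)) in Hs by lra.
    remember ((s - a)/e) as t eqn:Et.
    assert (Ht0 : 0 <= t) by (subst t; apply Rmult_le_pos; [lra| left; apply Rinv_0_lt_compat; lra]).
    assert (Ht1 : t <= 1) by (subst t; apply (Rmult_le_reg_r e); [lra|]; field_simplify; lra).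
    assert (C1 := Hc (a+e) a t Iap Ia (conj Ht0 Ht1)).
    replace (t * (a + e) + (1 - t) * a) with s in C1 by (subst t; field; lra).
    assert (C2 := Hc (a-e) s (t/(1+t)) Iam Is).
    replace (t / (1 + t) * (a - e) + (1 - t / (1 + t)) * s) with a in C2 by (subst t; field; lra).
    assert (Hl0 : 0 <= t/(1+t) <= 1).
    { split. apply Rmult_le_pos; [lra| left; apply Rinv_0_lt_compat; lra].
      apply (Rmult_le_reg_r (1+t)); [lra|]. field_simplify; lra. }
    specialize (C2 Hl0).
    assert (C2' : (1+t) * g a <= t * g (a-e) + g s).
    { apply (Rmult_le_compat_l (1+t)) in C2; [|lra].
      replace ((1 + t) * (t / (1 + t) * g (a - e) + (1 - t / (1 + t)) * g s)) with (t * g (a-e) + g s) in C2 by (field; lra).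
      exact C2. }
    replace ((s - a) * (M / e)) with (t * M) by (subst t; field; lra).
    apply Rabs_le. split; nra.
  - rewrite (Rabs_left (s-a)) by lra.
    rewrite (Rabs_left (s-a)) in Hs by lra.
    remember ((a - s)/e) as t eqn:Et.
    assert (Ht0 : 0 <= t) by (subst t; apply Rmult_le_pos; [lra| left; apply Rinv_0_lt_compat; lra]).
    assert (Ht1 : t <= 1) by (subst t; apply (Rmult_le_reg_r e); [lra|]; field_simplify; lra).
    assert (C1 := Hc (a-e) a t Iam Ia (conj Ht0 Ht1)).
    replace (t * (a - e) + (1 - t) * a) with s in C1 by (subst t; field; lra).
    assert (C2 := Hc (a+e) s (t/(1+t)) Iap Is).
    replace (t / (1 + t) * (a + e) + (1 - t / (1 + t)) * s) with a in C2 by (subst t; field; lra).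
    assert (Hl0 : 0 <= t/(1+t) <= 1).
    { split. apply Rmult_le_pos; [lra| left; apply Rinv_0_lt_compat; lra].
      apply (Rmult_le_reg_r (1+t)); [lra|]. field_simplify; lra. }
    specialize (C2 Hl0).
    assert (C2' : (1+t) * g a <= t * g (a+e) + g s).
    { apply (Rmult_le_compat_l (1+t)) in C2; [|lra].
      replace ((1 + t) * (t / (1 + t) * g (a + e) + (1 - t / (1 + t)) * g s)) with (t * g (a+e) + g s) in C2 by (field; lra).
      exact C2. }
    replace (- (s - a) * (M / e)) with (t * M) by (subst t; field; lra).
    apply Rabs_le. split; nra.
Qed.

Lemma conv_cont (I : R -> Prop) (g : R -> R) (a : R) :
  convex_on I g -> is_open_set I -> I a ->
  forall eps, 0 < eps -> exists d, 0 < d /\ forall s, Rabs (s - a) < d -> Rabs (g s - g a) < eps.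
Proof.
  intros Hc Ho Ia eps Heps.
  destruct (Ho a Ia) as [e [He Hb]].
  assert (Hb' : forall y, Rabs (y - a) <= e/2 -> I y) by (intros y Hy; apply Hb; lra).
  assert (B := conv_bound I g a (e/2) Hc ltac:(lra) Hb').
  remember ((Rabs (g (a+e/2) - g a) + Rabs (g a - g (a-e/2))) / (e/2)) as K eqn:EK.
  assert (HK : 0 <= K).
  { subst K. apply Rmult_le_pos. assert (H1 := Rabs_pos (g (a+e/2) - g a)).
    assert (H2 := Rabs_pos (g a - g (a-e/2))). lra. left; apply Rinv_0_lt_compat; lra. }
  exists (Rmin (e/2) (eps / (K+1))).
  assert (H3 : 0 < eps / (K+1)) by (apply Rdiv_lt_0_compat; lra).
  split. apply Rmin_pos; lra.
  intros s Hs.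
  assert (Hs1 := Rmin_l (e/2) (eps/(K+1))). assert (Hs2 := Rmin_r (e/2) (eps/(K+1))).
  assert (Hsa := B s ltac:(lra)).
  assert (Hp := Rabs_pos (s - a)).
  assert (Hlt : Rabs (s - a) * (K+1) < eps).
  { replace eps with (eps / (K+1) * (K+1)) by (field; lra).
    apply Rmult_lt_compat_r; lra. }
  nra.
Qed.
Lemma lemL (phi psi : R -> R) (a c d0 : R) :
 0 < d0 ->
 (forall eps, 0 < eps -> exists d, 0 < d /\ forall s, Rabs (s - a) < d -> Rabs (psi s - psi a) < eps) ->
 (forall s, Rabs (s-a) < d0 -> s < a -> phi s <= phi a) ->
 (forall s, Rabs (s-a) < d0 -> a < s -> phi a <= phi s) ->
 (forall d, 0 < d -> exists s, a - d < s < a /\ phi s - psi s = c) ->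
 (forall d, 0 < d -> exists s, a < s < a + d /\ phi s - psi s = c) ->
 phi a - psi a = c.
Proof.
  intros Hd0 Hcont Hm1 Hm2 Hl Hr.
  assert (K : forall eps, 0 < eps -> phi a - psi a - c < eps /\ - eps < phi a - psi a - c).
  { intros eps He.
    destruct (Hcont eps He) as [d [Hd Hps]].
    assert (Hd' : 0 < Rmin d d0) by (apply Rmin_pos; lra).
    assert (M1 := Rmin_l d d0). assert (M2 := Rmin_r d d0).
    destruct (Hl _ Hd') as [s1 [Hs1 E1]].
    destruct (Hr _ Hd') as [s2 [Hs2 E2]].
    assert (A1 : Rabs (s1 - a) < Rmin d d0) by (apply Rabs_def1; lra).
    assert (A2 : Rabs (s2 - a) < Rmin d d0) by (apply Rabs_def1; lra).
    assert (P1 := Rabs_def2 _ _ (Hps s1 ltac:(lra))).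
    assert (P2 := Rabs_def2 _ _ (Hps s2 ltac:(lra))).
    assert (Q1 := Hm1 s1 ltac:(lra) ltac:(lra)).
    assert (Q2 := Hm2 s2 ltac:(lra) ltac:(lra)).
    lra. }
  destruct (Rtotal_order (phi a - psi a - c) 0) as [H|[H|H]].
  - destruct (K (- (phi a - psi a - c)) ltac:(lra)). lra.
  - lra.
  - destruct (K (phi a - psi a - c) ltac:(lra)). lra.
Qed.

Lemma wr_nonneg (I : R -> Prop) (f : R -> R) :
  wright_convex_on I f -> forall x u v, 0 < u -> 0 < v -> I x -> I (x+u+v) ->
  f (x+u) + f (x+v) <= f x + f (x+u+v).
Proof.
  intros Hw x u v Hu Hv Ix Iy.
  assert (Ht : 0 <= v/(u+v) <= 1).
  { split. apply Rmult_le_pos; [lra| left; apply Rinv_0_lt_compat; lra].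
    apply (Rmult_le_reg_r (u+v)); [lra|]. field_simplify; lra. }
  assert (W := Hw x (x+u+v) (v/(u+v)) Ix Iy Ht).
  replace (v / (u + v) * x + (1 - v / (u + v)) * (x + u + v)) with (x+u) in W by (field; lra).
  replace ((1 - v / (u + v)) * x + v / (u + v) * (x + u + v)) with (x+v) in W by (field; lra).
  lra.
Qed.

Definition cont_at (g : R -> R) (a : R) := forall eps, 0 < eps -> exists d, 0 < d /\ forall s, Rabs (s - a) < d -> Rabs (g s - g a) < eps.

Lemma cont_diff (g : R -> R) (a v : R) : cont_at g a -> cont_at g (a+v) ->
  cont_at (fun s => g (s+v) - g s) a.
Proof.
  intros H1 H2 eps He.
  destruct (H1 (eps/2) ltac:(lra)) as [d1 [Hd1 P1]].
  destruct (H2 (eps/2) ltac:(lra)) as [d2 [Hd2 P2]].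
  exists (Rmin d1 d2). split. apply Rmin_pos; lra.
  intros s Hs. assert (M1 := Rmin_l d1 d2). assert (M2 := Rmin_r d1 d2).
  assert (A := Rabs_def2 _ _ (P1 s ltac:(lra))).
  assert (B := Rabs_def2 _ _ (P2 (s+v) ltac:(replace (s+v-(a+v)) with (s-a) by ring; lra))).
  apply Rabs_def1; lra.
Qed.

Lemma wr_nonneg' (I : R -> Prop) (f : R -> R) :
  wright_convex_on I f -> forall x y v, x < y -> 0 < v -> I x -> I (y+v) ->
  f y + f (x+v) <= f x + f (y+v).
Proof.
  intros Hw x y v Hxy Hv Ix Iy.
  assert (W := wr_nonneg I f Hw x (y-x) v ltac:(lra) Hv Ix ltac:(replace (x+(y-x)+v) with (y+v) by ring; exact Iy)).
  replace (x+(y-x)) with y in W by ring. replace (y+v) with (y+v) in W by ring. exact W.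
Qed.

Lemma ball_sub (I : R -> Prop) (a b e1 e2 s : R) :
  (forall y, Rabs (y - a) < e1 -> I y) -> (forall y, Rabs (y - (a+b)) < e2 -> I y) ->
  Rabs (s - a) < Rmin e1 e2 -> I s /\ I (s + b).
Proof.
  intros H1 H2 Hs. assert (M1 := Rmin_l e1 e2). assert (M2 := Rmin_r e1 e2).
  split. apply H1; lra. apply H2. replace (s+b-(a+b)) with (s-a) by ring; lra.
Qed.

Lemma step1 (I : R -> Prop) (f g : R -> R) :
  nonempty_open_interval I -> wright_convex_on I f -> convex_on I g ->
  (forall x, I x -> is_rational x -> g x = f x) ->
  forall r : Q, 0 < Q2R r -> forall y, I y -> I (y + Q2R r) ->
  f (y + Q2R r) - f y = g (y + Q2R r) - g y.
Proof.
  intros [Hi [Ho _]] Hw Hc Hq r Hr y Iy Iyr.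
  destruct (Ho y Iy) as [e1 [He1 B1]].
  destruct (Ho _ Iyr) as [e2 [He2 B2]].
  assert (Hd0 : 0 < Rmin e1 e2) by (apply Rmin_pos; lra).
  assert (Hrat : forall q : Q, I (Q2R q) -> I (Q2R q + Q2R r) ->
     (fun s => f (s + Q2R r) - f s) (Q2R q) - (fun s => g (s + Q2R r) - g s) (Q2R q) = 0).
  { intros q I1 I2. simpl.
    rewrite (Hq _ I1) by (exists q; reflexivity).
    rewrite (Hq _ I2) by (exists (q + r)%Q; apply Q2R_plus). ring. }
  assert (Hcg : forall a, I a -> cont_at g a) by (intros a Ia; exact (conv_cont I g a Hc Ho Ia)).
  assert (L := lemL (fun s => f (s + Q2R r) - f s) (fun s => g (s + Q2R r) - g s) y 0 (Rmin e1 e2) Hd0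
     (cont_diff g y (Q2R r) (Hcg y Iy) (Hcg _ Iyr))).
  simpl in L. enough (f (y + Q2R r) - f y - (g (y + Q2R r) - g y) = 0) by lra.
  apply L.
  - intros s Hs Hsy. destruct (ball_sub I y (Q2R r) e1 e2 s B1 B2 Hs) as [Is Isr].
    assert (W := wr_nonneg' I f Hw s y (Q2R r) Hsy Hr Is Iyr). lra.
  - intros s Hs Hsy. destruct (ball_sub I y (Q2R r) e1 e2 s B1 B2 Hs) as [Is Isr].
    assert (W := wr_nonneg' I f Hw y s (Q2R r) Hsy Hr Iy Isr). lra.
  - intros d Hd. assert (Hm : 0 < Rmin d (Rmin e1 e2)) by (apply Rmin_pos; lra).
    assert (M1 := Rmin_l d (Rmin e1 e2)). assert (M2 := Rmin_r d (Rmin e1 e2)).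
    destruct (Qdense (y - Rmin d (Rmin e1 e2)) (Rmin d (Rmin e1 e2)) Hm) as [q Hq1].
    exists (Q2R q). split. lra.
    destruct (ball_sub I y (Q2R r) e1 e2 (Q2R q) B1 B2 ltac:(apply Rabs_def1; lra)) as [I1 I2].
    apply (Hrat q I1 I2).
  - intros d Hd. assert (Hm : 0 < Rmin d (Rmin e1 e2)) by (apply Rmin_pos; lra).
    assert (M1 := Rmin_l d (Rmin e1 e2)). assert (M2 := Rmin_r d (Rmin e1 e2)).
    destruct (Qdense y (Rmin d (Rmin e1 e2)) Hm) as [q Hq1].
    exists (Q2R q). split. lra.
    destruct (ball_sub I y (Q2R r) e1 e2 (Q2R q) B1 B2 ltac:(apply Rabs_def1; lra)) as [I1 I2].
    apply (Hrat q I1 I2).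
Qed.


Theorem mainTheorem5 (I : R -> Prop) (f g : R -> R) :
  nonempty_open_interval I ->
  wright_convex_on I f ->
  convex_on I g ->
  (forall x, I x -> is_rational x -> g x = f x) ->
  forall u v x, 0 < u -> 0 < v -> I x -> I (x + u + v) ->
    f (x + u + v) - f (x + u) - f (x + v) + f x
    = g (x + u + v) - g (x + u) - g (x + v) + g x.
Proof.
  intros HI Hw Hc Hq u v x Hu Hv Ix Iy.
  assert (S1 := step1 I f g HI Hw Hc Hq).
  destruct HI as [Hi [Ho _]].
  assert (Ixu : I (x+u)) by (apply (Hi x (x+u+v)); auto; lra).
  assert (Ixv : I (x+v)) by (apply (Hi x (x+u+v)); auto; lra).
  destruct (Ho x Ix) as [e1 [He1 B1]].
  destruct (Ho _ Ixv) as [e2 [He2 B2]].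
  assert (Hd0 : 0 < Rmin e1 e2) by (apply Rmin_pos; lra).
  assert (Hcg : forall a, I a -> cont_at g a) by (intros a Ia; exact (conv_cont I g a Hc Ho Ia)).
  assert (L := lemL (fun s => f (s + v) - f s) (fun s => g (s + v) - g s) x
     ((f (x+u+v) - f (x+u)) - (g (x+u+v) - g (x+u))) (Rmin e1 e2) Hd0
     (cont_diff g x v (Hcg x Ix) (Hcg _ Ixv))).
  simpl in L.
  enough (f (x + v) - f x - (g (x + v) - g x) = f (x + u + v) - f (x + u) - (g (x + u + v) - g (x + u))) by lra.
  assert (Hshift : forall q : Q, 0 < Q2R q -> Rabs (x + u - Q2R q - x) < Rmin e1 e2 ->
     f (x + u - Q2R q + v) - f (x + u - Q2R q) - (g (x + u - Q2R q + v) - g (x + u - Q2R q)) =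
     f (x + u + v) - f (x + u) - (g (x + u + v) - g (x + u))).
  { intros q Hq0 Hb.
    destruct (ball_sub I x v e1 e2 _ B1 B2 Hb) as [I1 I2].
    assert (A1 := S1 q Hq0 _ I1 ltac:(replace (x + u - Q2R q + Q2R q) with (x+u) by ring; exact Ixu)).
    assert (A2 := S1 q Hq0 _ I2 ltac:(replace (x + u - Q2R q + v + Q2R q) with (x+u+v) by ring; exact Iy)).
    replace (x + u - Q2R q + Q2R q) with (x+u) in A1 by ring.
    replace (x + u - Q2R q + v + Q2R q) with (x+u+v) in A2 by ring.
    lra. }
  apply L.
  - intros s Hs Hsy. destruct (ball_sub I x v e1 e2 s B1 B2 Hs) as [Is Isr].
    assert (W := wr_nonneg' I f Hw s x v Hsy Hv Is Ixv). lra.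
  - intros s Hs Hsy. destruct (ball_sub I x v e1 e2 s B1 B2 Hs) as [Is Isr].
    assert (W := wr_nonneg' I f Hw x s v Hsy Hv Ix Isr). lra.
  - intros d Hd. assert (Hm : 0 < Rmin d (Rmin e1 e2)) by (apply Rmin_pos; lra).
    assert (M1 := Rmin_l d (Rmin e1 e2)). assert (M2 := Rmin_r d (Rmin e1 e2)).
    destruct (Qdense u (Rmin d (Rmin e1 e2)) Hm) as [q Hq1].
    exists (x + u - Q2R q). split. lra.
    apply Hshift. lra. apply Rabs_def1; lra.
  - intros d Hd. assert (Hm : 0 < Rmin (Rmin d (Rmin e1 e2)) u) by (repeat apply Rmin_pos; lra).
    assert (M1 := Rmin_l d (Rmin e1 e2)). assert (M2 := Rmin_r d (Rmin e1 e2)).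
    assert (M3 := Rmin_l (Rmin d (Rmin e1 e2)) u). assert (M4 := Rmin_r (Rmin d (Rmin e1 e2)) u).
    destruct (Qdense (u - Rmin (Rmin d (Rmin e1 e2)) u) (Rmin (Rmin d (Rmin e1 e2)) u) Hm) as [q Hq1].
    exists (x + u - Q2R q). split. lra.
    apply Hshift. lra. apply Rabs_def1; lra.
Qed.
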